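(* Let $d \ge 1$ be an integer and let $\gamma, c_1, c_2 > 0$ be real numbers. There exists a constant $K$, depending only on $d, \gamma, c_1, c_2$, such that the following holds for every positive integer $N$: if $Q = N^\gamma$, $P \subseteq \mathcal{P}(Q)$ is a set of primes with $w(P) \ge c_1 \log Q$, and $S \subseteq [N]^d$ occupies fewer than $c_2$ residue classes modulo $p$ for every prime $p \in P$, then $|S| \le K$.
   Context: $[N] = \{0,1,\ldots,N\}$. $\mathcal{P}(Q)$ denotes the set of primes $p \le Q$, and for a finite set of primes $P$, $w(P) := \sum_{p \in P} \frac{\log p}{p}$. A set $S \subseteq \mathbb{Z}^d$ occupies $m$ residue classes mod $p$ if its image in $(\mathbb{Z}/p\mathbb{Z})^d$ has $m$ elements. *)

(* Defs.v *)
From HB Require Import structures.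
From mathcomp Require Import all_boot all_order all_algebra.
From mathcomp Require Import reals exp.
Set Implicit Arguments. Unset Strict Implicit. Unset Printing Implicit Defensive.
Import Order.TTheory GRing.Theory Num.Theory.
Local Open Scope ring_scope.

(* Points of [N]^d = {0,...,N}^d are finite functions 'I_d -> 'I_N.+1. *)
Definition grid (d N : nat) := {ffun 'I_d -> 'I_N.+1}.

Definition reduce_mod (d N p : nat) (x : grid d N) : seq nat :=
  [seq ((x i : nat) %% p)%N | i <- enum 'I_d].

Definition num_classes (d N p : nat) (S : {set grid d N}) : nat :=
  size (undup [seq reduce_mod p x | x <- enum S]).

(* w(P) = sum_{p in P} log p / p  (P given as a duplicate-free list). *)
Definition wP (R : realType) (P : seq nat) : R :=
  \sum_(p <- P) ln (p%:R : R) / p%:R.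

(* Main.v *)
Require Import Defs.
From HB Require Import structures.
From mathcomp Require Import all_boot all_order all_algebra.
From mathcomp Require Import reals exp sequences.
From mathcomp Require Import zify ring lra.
Set Implicit Arguments. Unset Strict Implicit. Unset Printing Implicit Defensive.

Lemma prod_primes_dvd (L : seq nat) (D : nat) :
  uniq L -> all prime L -> (forall p, p \in L -> p %| D) -> \prod_(p <- L) p %| D.
Proof.
elim: L => [|q L IH] /=; first by rewrite big_nil dvd1n.
case/andP=> qL uL /andP[pq aL] H.
rewrite big_cons Gauss_dvd; last first.
  rewrite prime_coprime // Euclid_dvd_prod // big_has.
  apply/hasPn => r rL /=; rewrite dvdn_prime2 //; last exact: (allP aL).
  by apply/eqP=> E; move: qL; rewrite E rL.
rewrite H ?mem_head //= IH // => p pL; by apply: H; rewrite in_cons pL orbT.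
Qed.

Definition gdist d N (x y : grid d N) : nat :=
  if [pick i | x i != y i] is Some i then ((x i - y i) + (y i - x i))%N else 0.

Lemma gdist_pos d N (x y : grid d N) : x != y -> 0 < gdist x y <= N.
Proof.
move=> xy; rewrite /gdist; case: pickP => [i /= Hi|H].
  have h1 := ltn_ord (x i); have h2 := ltn_ord (y i).
  move: Hi; rewrite -val_eqE /=; lia.
by case/eqP: xy; apply/ffunP => i; move: (H i) => /= /negbFE/eqP.
Qed.

Lemma gdist_dvd d N p (x y : grid d N) :
  reduce_mod p x = reduce_mod p y -> p %| gdist x y.
Proof.
move=> E; rewrite /gdist; case: pickP => [i /= Hi|H]; last exact: dvdn0.
have := E; rewrite /reduce_mod => /eq_in_map/(_ i (mem_enum _ _)) Ei.
case: (leqP (y i) (x i)) => h.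
  have -> : (y i - x i = 0)%N by lia.
  by rewrite addn0 -eqn_mod_dvd // Ei.
have -> : (x i - y i = 0)%N by lia.
by rewrite add0n -eqn_mod_dvd ?Ei // ltnW.
Qed.

Lemma sum_sel (T : eqType) (V : seq T) (u : T) (F : T -> nat) :
  uniq V -> u \in V -> \sum_(v <- V) (u == v) * F v = F u.
Proof.
move=> uV uin; rewrite (big_rem u) //= eqxx mul1n big1_seq ?addn0 // => v /andP[_ vin].
have : v != u by move: vin; rewrite mem_rem_uniq //= => /andP[].
by rewrite eq_sym => /negbTE ->.
Qed.

Lemma cs_seq (T : Type) (V : seq T) (f : T -> nat) :
  (\sum_(v <- V) f v) ^ 2 <= size V * \sum_(v <- V) f v ^ 2.
Proof.
rewrite -(@leq_pmul2l 2) //.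
have E : (\sum_(v <- V) f v) ^ 2 = \sum_(v <- V) \sum_(w <- V) f v * f w.
  by rewrite expnS expn1 big_distrl /=; apply: eq_bigr => v _; rewrite big_distrr.
rewrite E big_distrr /=.
apply: (@leq_trans (\sum_(v <- V) \sum_(w <- V) (f v ^ 2 + f w ^ 2))).
  apply: leq_sum => v _; rewrite big_distrr /=; apply: leq_sum => w _.
  move: (f v) (f w) => a b; case: (leqP a b) => h; [have [c ->] : exists c, b = a + c by exists (b - a); lia | have [c ->] : exists c, a = b + c by exists (a - b); lia]; nia.
rewrite (eq_bigr (fun v => size V * f v ^ 2 + \sum_(w <- V) f w ^ 2)); last first.
  move=> v _; rewrite big_split /= big_const_seq count_predT iter_addn_0 mulnC //.
rewrite big_split /= -big_distrr /= big_const_seq count_predT iter_addn_0.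
lia.
Qed.

Section Core.
Variables (d N : nat) (S : {set grid d N}).
Definition rr p (x : grid d N) := reduce_mod p x.
Definition aa p (v : seq nat) := \sum_(y in S) (rr p y == v : nat).
Definition tt p := \sum_(x in S) aa p (rr p x).
Definition VV p := undup [seq rr p x | x <- enum S].

Lemma rr_in p x : x \in S -> rr p x \in VV p.
Proof. by move=> xS; rewrite mem_undup; apply: map_f; rewrite mem_enum. Qed.

Lemma card_sum p : #|S| = \sum_(v <- VV p) aa p v.
Proof.
rewrite -sum1_card.
rewrite (eq_bigr (fun x => \sum_(v <- VV p) (rr p x == v) * 1)); last first.
  by move=> x xS; rewrite sum_sel ?undup_uniq ?rr_in.
rewrite exchange_big /=; apply: eq_bigr => v _; rewrite /aa.
by apply: eq_bigr => x _; rewrite muln1.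
Qed.

Lemma tt_sum p : tt p = \sum_(v <- VV p) aa p v ^ 2.
Proof.
rewrite /tt (eq_bigr (fun x => \sum_(v <- VV p) (rr p x == v) * aa p v)); last first.
  by move=> x xS; rewrite sum_sel ?undup_uniq ?rr_in.
rewrite exchange_big /=; apply: eq_bigr => v _.
by rewrite -big_distrl /= expnS expn1.
Qed.

Lemma tt_lower p C : num_classes p S <= C -> #|S| ^ 2 <= C * tt p.
Proof.
move=> hC; rewrite (card_sum p) tt_sum.
apply: leq_trans (cs_seq _ _) _; apply: leq_mul => //.
Qed.

Lemma G_bound (P : seq nat) (x y : grid d N) : uniq P -> all prime P -> x != y ->
  \prod_(p <- P | rr p y == rr p x) p <= N.
Proof.
move=> uP aP xy; have /andP[g0 gN] := gdist_pos xy.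
apply: leq_trans gN; apply: dvdn_leq => //.
rewrite -big_filter; apply: prod_primes_dvd.
- exact: filter_uniq.
- by apply/allP => p; rewrite mem_filter => /andP[_ pP]; exact: (allP aP).
move=> p; rewrite mem_filter => /andP[/eqP E _]; exact: gdist_dvd.
Qed.

Lemma prod_tt (P : seq nat) : 0 < N -> uniq P -> all prime P ->
  \prod_(p <- P) p ^ tt p <= (\prod_(p <- P) p) ^ #|S| * N ^ (#|S| * #|S|).
Proof.
move=> N0 uP aP.
have E : \prod_(p <- P) p ^ tt p =
   \prod_(x in S) \prod_(y in S) \prod_(p <- P | rr p y == rr p x) p.
  rewrite (eq_bigr (fun p => \prod_(x in S) \prod_(y in S) p ^ (rr p y == rr p x))); last first.
    move=> p _; rewrite /tt expn_sum; apply: eq_bigr => x _; rewrite /aa expn_sum //.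
  rewrite exchange_big /=; apply eq_bigr => x _.
  rewrite exchange_big /=; apply eq_bigr => y _.
  rewrite [RHS]big_mkcond /=; apply: eq_bigr => p _.
  by case: eqP; rewrite ?expn1 ?expn0.
rewrite E -prod_nat_const expnM -prod_nat_const -big_split /=.
apply: leq_prod => x xS.
rewrite (bigD1 x) //=.
have -> : \prod_(p <- P | rr p x == rr p x) p = \prod_(p <- P) p.
  by apply: eq_bigl => p; rewrite eqxx.
apply: leq_mul => //.
apply: (@leq_trans (\prod_(y in S | y != x) N)).
  apply: leq_prod => y /andP[_ yx]; apply: G_bound => //; by rewrite eq_sym.
apply: (@leq_trans (\prod_(y in S) N)); last by rewrite prod_nat_const.
rewrite big_mkcondr /=; apply: leq_prod => y _.
by case: (y != x).
Qed.
End Core.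

Lemma my_expn_prod (r : seq nat) (F : nat -> nat) n :
  (\prod_(i <- r) F i) ^ n = \prod_(i <- r) F i ^ n.
Proof.
elim: r => [|a r IH]; first by rewrite !big_nil exp1n.
by rewrite !big_cons expnMn IH.
Qed.

Lemma expn_mono a b e : a <= b -> a ^ e <= b ^ e.
Proof. by case: e => [|e] h //; rewrite leq_exp2r. Qed.

Lemma core d N (S : {set grid d N}) (P : seq nat) C :
  1 < N -> 0 < C -> uniq P -> all prime P ->
  (forall p, p \in P -> num_classes p S <= C) ->
  N ^ (2 * C) <= \prod_(p <- P) p -> #|S| <= 2 * C.
Proof.
move=> N1 C0 uP aP hC hM.
set M := \prod_(p <- P) p in hM *; set m := #|S|.
have M2 : 1 < M.
  have h2C : 1 <= 2 * C by rewrite (leq_trans C0) // leq_pmull.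
  have NN : N <= N ^ (2 * C) by rewrite -[leqLHS]expn1 leq_exp2l.
  exact: (leq_trans N1 (leq_trans NN hM)).
have h1 : M ^ (m * m) <= \prod_(p <- P) p ^ (C * tt S p).
  rewrite /M my_expn_prod big_seq_cond [X in _ <= X]big_seq_cond.
  apply: leq_prod => p /andP[pP _]; rewrite leq_pexp2l ?prime_gt0 ?(allP aP) //.
  by rewrite mulnn tt_lower // hC.
have h2 : \prod_(p <- P) p ^ (C * tt S p) <= (M ^ m * N ^ (m * m)) ^ C.
  rewrite (eq_bigr (fun p => (p ^ tt S p) ^ C)); last by move=> p _; rewrite mulnC expnM.
  rewrite -my_expn_prod; apply: expn_mono; apply: prod_tt => //; lia.
have h3 : M ^ (m * m) * M ^ (m * m) <= M ^ (2 * m * C) * M ^ (m * m).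
  have H := leq_mul (leq_trans h1 h2) (leq_trans h1 h2).
  apply: leq_trans H _.
  rewrite -expnD expnMn -!expnM; apply: leq_mul.
    by apply: eq_leq; congr (_ ^ _); lia.
  have -> : m * m * (C + C) = 2 * C * (m * m) by lia.
  by rewrite expnM; apply: expn_mono.
rewrite leq_pmul2r ?expn_gt0 ?(ltnW M2) // leq_exp2l // in h3.
clear -h3; case: m h3 => // m'; nia.
Qed.

Import Order.TTheory GRing.Theory Num.Theory.
Local Open Scope ring_scope.

Lemma prod_primes_gt0 (P : seq nat) : all prime P -> (0 < \prod_(p <- P) p)%N.
Proof.
elim: P => [|q P IH] /=; first by rewrite big_nil.
by case/andP=> pq aP; rewrite big_cons muln_gt0 prime_gt0 // IH.
Qed.

Lemma ln_prod_nat (R : realType) (P : seq nat) : all prime P ->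
  ln (((\prod_(p <- P) p)%N)%:R : R) = \sum_(p <- P) ln (p%:R : R).
Proof.
elim: P => [|q P IH] /=; first by rewrite !big_nil ln1.
case/andP=> pq aP; rewrite !big_cons natrM lnM ?IH // posrE ltr0n.
  exact: prime_gt0.
exact: prod_primes_gt0.
Qed.

Lemma term_bound (R : realType) (p M0 : nat) : (0 < M0)%N -> (0 < p)%N ->
  ln (p%:R : R) / p%:R <= ((p <= M0)%N)%:R + ln (p%:R : R) / M0%:R.
Proof.
move=> M0p pp.
have lnp0 : 0 <= ln (p%:R : R) by apply: ln_ge0; rewrite ler1n.
have lnpp : ln (p%:R : R) <= p%:R.
  have := @le_ln1Dx R (p%:R - 1).
  have -> : 1 + (p%:R - 1) = p%:R :> R by ring.
  move=> H.
  apply: le_trans (H _) _; last by lra.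
  have : (0:R) < p%:R by rewrite ltr0n.
  lra.
have d0 : 0 <= ln (p%:R : R) / M0%:R by rewrite divr_ge0.
case: leqP => h /=.
  have : ln (p%:R : R) / p%:R <= 1 by rewrite ler_pdivrMr ?ltr0n // mul1r.
  lra.
rewrite add0r ler_pdivrMr ?ltr0n // mulrAC ler_pdivlMr ?ltr0n //.
by apply: ler_wpM2l => //; rewrite ler_nat ltnW.
Qed.

Lemma wP_bound (R : realType) (P : seq nat) (M0 : nat) :
  (0 < M0)%N -> uniq P -> all prime P ->
  wP R P <= (M0.+1)%:R + (\sum_(p <- P) ln (p%:R : R)) / M0%:R.
Proof.
move=> M0p uP aP; rewrite /wP.
apply: le_trans (_ : \sum_(p <- P) (((p <= M0)%N : nat)%:R + ln (p%:R : R) / M0%:R) <= _).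
  rewrite big_seq_cond [X in _ <= X]big_seq_cond; apply: ler_sum => p /andP[pP _].
  by apply: term_bound => //; apply: prime_gt0; apply: (allP aP).
rewrite big_split /= -mulr_suml lerD2r.
have E : \sum_(p <- P) (((p <= M0)%N : nat)%:R : R) = (count (fun p => p <= M0)%N P)%:R.
  rewrite -sum1_count natr_sum [RHS]big_mkcond; apply: eq_bigr => p _; by case: leqP.
rewrite E ler_nat -size_filter.
have -> : M0.+1 = size (iota 0 M0.+1) by rewrite size_iota.
apply: uniq_leq_size; first exact: filter_uniq.
by move=> p; rewrite mem_filter mem_iota => /andP[h _]; rewrite add0n ltnS.
Qed.

Lemma real_key (R : realType) (g lnN L B : R) (M0 A : nat) :
  0 < g -> (0 < M0)%N -> 2 * A%:R / g <= M0%:R -> B = 2 * (M0.+1)%:R / g ->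
  B <= lnN -> g * lnN <= (M0.+1)%:R + L / M0%:R -> lnN *+ A <= L.
Proof.
move=> g0 M0p hM0 EB hB hw; rewrite -mulr_natl.
have M0r : (0 : R) < M0%:R by rewrite ltr0n.
have gB : g * B = 2 * (M0.+1)%:R by rewrite EB; field; lra.
have f1 : (M0.+1)%:R <= g * lnN / 2.
  have : g * B <= g * lnN by rewrite ler_pM2l.
  lra.
have f2 : g * lnN / 2 <= L / M0%:R by lra.
have f3 : M0%:R * (g * lnN / 2) <= L.
  by rewrite mulrC -ler_pdivlMr.
have lnN0 : 0 <= lnN.
  have : 0 <= B by rewrite EB divr_ge0 //; lra.
  lra.
have f4 : A%:R <= M0%:R * g / 2.
  have : 2 * A%:R <= M0%:R * g by rewrite -ler_pdivrMr.
  lra.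
apply: le_trans f3.
have := ler_wpM2r lnN0 f4.
have -> : M0%:R * g / 2 * lnN = M0%:R * (g * lnN / 2) by ring.
done.
Qed.

Theorem lemma3p2 (R : realType) (d : nat) (gamma c1 c2 : R) :
  (1 <= d)%N -> 0 < gamma -> 0 < c1 -> 0 < c2 ->
  exists K : nat, forall N : nat, (0 < N)%N ->
    forall (P : seq nat) (S : {set grid d N}),
      let Q : R := (N%:R : R) `^ gamma in
      uniq P ->
      (forall p, p \in P -> prime p /\ (p%:R : R) <= Q) ->
      c1 * ln Q <= wP R P ->
      (forall p, p \in P -> ((num_classes p S)%:R : R) < c2) ->
      (#|S| <= K)%N.
Proof.
move=> d1 g0 c10 c20.
set C := Num.Def.archi_bound c2.
have hc2 : c2 < C%:R by apply: archi_boundP; lra.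
have C0 : (0 < C)%N by rewrite -(ltr0n R); lra.
set g := c1 * gamma.
have gp : 0 < g by rewrite mulr_gt0.
set A := (2 * C)%N.
set M0 := (Num.Def.archi_bound (2 * A%:R / g)).+1.
have hM0 : 2 * A%:R / g <= M0%:R.
  have : 2 * A%:R / g < (Num.Def.archi_bound (2 * A%:R / g))%:R.
    by apply: archi_boundP; rewrite divr_ge0 // ?mulr_ge0 // ltW.
  rewrite /M0 -addn1 natrD; lra.
set B := 2 * (M0.+1)%:R / g.
set N0 := (Num.Def.archi_bound (expR B)).+2.
have hN0 : expR B < N0%:R.
  have : expR B < (Num.Def.archi_bound (expR B))%:R.
    by apply: archi_boundP; rewrite ltW // expR_gt0.
  rewrite /N0 -addn2 natrD; lra.
exists (maxn (2 * C) (N0 ^ d)).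
move=> N Np P S Q uP hP hw hcl.
case: (ltnP N N0) => hN.
  apply: leq_trans (leq_maxr _ _).
  apply: leq_trans (max_card _) _.
  rewrite /grid card_ffun !card_ord; exact: expn_mono.
apply: leq_trans (leq_maxl _ _).
have aP : all prime P by apply/allP => p pP; case: (hP p pP).
have N1 : (1 < N)%N by apply: leq_trans hN.
apply: (core N1 C0 uP aP).
  move=> p pP; have := hcl p pP => h; rewrite -ltnS -(ltr_nat R); lra.
rewrite -(ler_nat R) natrX -ler_ln ?posrE ?exprn_gt0 ?ltr0n ?prod_primes_gt0 //.
rewrite lnXn ?ltr0n // ln_prod_nat //.
have Npos : (0 : R) < N%:R by rewrite ltr0n.
apply: (@real_key R g (ln (N%:R : R)) _ B M0 A) => //.
- have : expR B <= N%:R.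
    apply: (le_trans (ltW hN0)); by rewrite ler_nat.
  by rewrite -ler_ln ?posrE ?expR_gt0 // expRK.
- apply: (le_trans _ (@wP_bound R P M0 (ltn0Sn _) uP aP)).
  move: hw; rewrite /Q ln_powR /g mulrA. exact: id.
Qed.
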